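(* Let $1\le\gamma\le2$. Let $\tilde\Phi:\mathbb{R}^N\to\mathbb{R}$ with $\nabla\tilde\Phi\in\Delta_N$, and suppose the full-information GBPA with potential $\tilde\Phi$ is DiffStable($D_{\infty,\gamma}$, $\|\cdot\|_\infty$) at level $\epsilon$, i.e. $D_{\infty,\gamma}(\nabla\tilde\Phi(\sum_{s<t}\ell'_s),\nabla\tilde\Phi(\sum_{s\le t}\ell'_s))\le\epsilon\|\ell'_t\|_\infty$ for all $t$ and all nonnegative loss vectors $\ell'_1,\dots,\ell'_t\in[0,\infty)^N$. In the $N$-armed bandit GBPA with losses $\ell_t\in[0,1]^N$, where $p_t=\nabla\tilde\Phi(\hat L_{t-1})$, $i_t\sim p_t$, $\hat\ell_t=\frac{\ell_{t,i_t}}{p_{t,i_t}}\mathbf{e}_{i_t}$, $\hat L_t=\hat L_{t-1}+\hat\ell_t$ (with $\hat L_0=0$) and $p_{t+1}=\nabla\tilde\Phi(\hat L_t)$, we have for every $t$ \[\langle p_t-p_{t+1},\hat\ell_t\rangle\le\epsilon\,\hat\ell_{t,i_t}^2\,p_{t,i_t}^\gamma.\]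
   Context: $\Delta_N$ is the probability simplex. The Tsallis $\gamma$-logarithm is $\log_\gamma(x)=\log x$ if $\gamma=1$ and $\frac{x^{1-\gamma}-1}{1-\gamma}$ otherwise; for distributions $P,Q$ on $[N]$, $D_{\infty,\gamma}(P,Q)=\sup_{B\subseteq[N]}\log_\gamma P(B)-\log_\gamma Q(B)$. *)

(* Defs.v *)
From HB Require Import structures.
From mathcomp Require Import all_boot all_order all_algebra.
From mathcomp Require Import all_classical all_reals all_analysis.
Set Implicit Arguments. Unset Strict Implicit. Unset Printing Implicit Defensive.
Import Order.TTheory GRing.Theory Num.Theory.
Import numFieldNormedType.Exports.
Local Open Scope ring_scope.

Section Defs.
Variables (R : realType) (N : nat).

Definition in_simplex (p : 'rV[R]_N) : Prop :=
  (forall i, 0 <= p ord0 i) /\ \sum_i p ord0 i = 1.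

Definition linf (v : 'rV[R]_N) : R := \big[Num.max/0]_i `|v ord0 i|.

Definition logg (gamma x : R) : \bar R :=
  if x <= 0 then -oo%E
  else if gamma == 1 then (ln x)%:E
  else ((x `^ (1 - gamma) - 1) / (1 - gamma))%:E.

Definition prob (P : 'rV[R]_N) (B : {set 'I_N}) : R := \sum_(i in B) P ord0 i.

Definition Dinf (gamma : R) (P Q : 'rV[R]_N) : \bar R :=
  \big[Order.max/-oo%E]_(B : {set 'I_N}) (logg gamma (prob P B) - logg gamma (prob Q B))%E.

Definition evec (i : 'I_N) : 'rV[R]_N := delta_mx ord0 i.

(* Bandit GBPA: G = grad Phi, ell t = loss vector at round t (t >= 1),
   arm t = chosen arm i_t.  Lhat t = cumulative estimated loss after t rounds. *)
Fixpoint Lhat (G : 'rV[R]_N -> 'rV[R]_N) (ell : nat -> 'rV[R]_N)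
  (arm : nat -> 'I_N) (t : nat) : 'rV[R]_N :=
  match t with
  | 0 => 0
  | s.+1 => Lhat G ell arm s +
            (ell s.+1 ord0 (arm s.+1) / G (Lhat G ell arm s) ord0 (arm s.+1))
              *: evec (arm s.+1)
  end.

Definition lhat (G : 'rV[R]_N -> 'rV[R]_N) (ell : nat -> 'rV[R]_N) (arm : nat -> 'I_N) (t : nat) : 'rV[R]_N :=
  (ell t ord0 (arm t) / G (Lhat G ell arm t.-1) ord0 (arm t)) *: evec (arm t).

End Defs.

(* Main.v *)
Require Import Defs.
From HB Require Import structures.
From mathcomp Require Import all_boot all_order all_algebra.
From mathcomp Require Import all_classical all_reals all_analysis.
From mathcomp Require Import lra ring.
Import Order.TTheory GRing.Theory Num.Theory.
Import numFieldNormedType.Exports.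
Set Implicit Arguments. Unset Strict Implicit.
Local Open Scope ring_scope.

Definition lg (R : realType) (gamma x : R) : R :=
  if gamma == 1 then ln x else (x `^ (1 - gamma) - 1) / (1 - gamma).

Lemma logg_pos (R : realType) (gamma x : R) : 0 < x -> logg gamma x = (lg gamma x)%:E.
Proof. by move=> x0; rewrite /logg /lg leNgt x0 /=; case: ifP. Qed.

Lemma ln_le_sub1 (R : realType) (x : R) : 0 < x -> ln x <= x - 1.
Proof. move=> x0; have := expR_ge1Dx (ln x); rewrite lnK ?posrE //; lra. Qed.

Lemma key (R : realType) (gamma p q : R) : 1 <= gamma -> 0 < q -> 0 < p ->
  p - q <= p `^ gamma * (lg gamma p - lg gamma q).
Proof.
move=> g1 q0 p0.
set x := q / p.
have x0 : 0 < x by rewrite divr_gt0.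
have qE : q = x * p by rewrite /x mulrVK // unitfE gt_eqF.
have lnx := ln_le_sub1 x0.
rewrite /lg; case: ifPn => [/eqP g1E|gn1].
  rewrite g1E (powRr1 (ltW p0)) qE lnM ?posrE // .
  have : p * (1 - x) <= p * (- ln x) by rewrite ler_pM2l //; lra.
  have -> : x * p = p * x by rewrite mulrC.
  lra.
set a := 1 - gamma.
have a0 : a < 0 by rewrite /a; rewrite lt_neqAle in gn1 *; lra.
have xa : 1 + a * (x - 1) <= x `^ a.
  rewrite /powR gt_eqF //; apply: le_trans (expR_ge1Dx _).
  rewrite lerD2l mulrC; nra.
rewrite qE (powRM _ (ltW x0) (ltW p0)).
have pp : p `^ gamma * p `^ a = p.
  by rewrite -powRD ?(gt_eqF p0) ?implybT // /a addrCA subrr addr0 (powRr1 (ltW p0)).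
have an0 : a != 0 by rewrite lt_eqF.
have -> : (p `^ a - 1) / a - (x `^ a * p `^ a - 1) / a = p `^ a * ((1 - x `^ a) / a).
  by field.
rewrite mulrA pp.
have h : 1 - x <= (1 - x `^ a) / a by rewrite ler_ndivlMr //; nra.
have := ler_wpM2l (ltW p0) h; rewrite mulrBr mulr1 (mulrC x); by [].
Qed.

Lemma sum_lhat (R : realType) (N : nat) (G : 'rV[R]_N -> 'rV[R]_N) ell arm n :
  \sum_(1 <= s < n.+1) lhat G ell arm s = Lhat G ell arm n.
Proof.
elim: n => [|n IH]; first by rewrite big_geq.
by rewrite big_nat_recr //= IH.
Qed.

Lemma logg1 (R : realType) (gamma : R) : logg gamma 1 = 0%E.
Proof. by rewrite logg_pos // /lg ln1 powR1 subrr mul0r; case: ifP. Qed.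


Lemma Dinf_ge (R : realType) (N : nat) (gamma : R) (P Q : 'rV[R]_N) B :
  (logg gamma (prob P B) - logg gamma (prob Q B) <= Dinf gamma P Q)%E.
Proof. exact: (le_bigmax -oo%E (fun B => logg gamma (prob P B) - logg gamma (prob Q B))%E B). Qed.

Lemma prob1 (R : realType) (N : nat) (P : 'rV[R]_N) i : prob P [set i] = P ord0 i.
Proof. by rewrite /prob big_set1. Qed.

Lemma probT (R : realType) (N : nat) (P : 'rV[R]_N) : in_simplex P -> prob P [set: 'I_N]%SET = 1.
Proof.
case=> _ <-; rewrite /prob; apply: eq_bigl => j; by rewrite finset.in_setT.
Qed.

Lemma linf_e (R : realType) (N : nat) (c : R) (i : 'I_N) : 0 <= c ->
  linf (c *: @evec R N i) = c.
Proof.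
move=> c0; apply/eqP; rewrite eq_le; apply/andP; split.
  apply: bigmax_le => // j _; rewrite !mxE eqxx /=.
  by case: (j == i); rewrite ?mulr1 ?mulr0 ?normr0 // ger0_norm.
have := le_bigmax 0 (fun j => `|(c *: @evec R N i) ord0 j|) i.
by rewrite /= !mxE !eqxx /= mulr1 ger0_norm.
Qed.

Unset Implicit Arguments. Set Strict Implicit.
Theorem lemma7 (R : realType) (N : nat) (gamma eps : R)
  (Phi : 'rV[R]_N -> R) (G : 'rV[R]_N -> 'rV[R]_N) :
  1 <= gamma <= 2 ->
  (* G is the gradient of Phi, with values in the simplex *)
  (forall x, differentiable Phi x) ->
  (forall x (i : 'I_N), 'D_(@evec R N i) Phi x = G x ord0 i) ->
  (forall x, in_simplex (G x)) ->
  (* DiffStable(D_{infty,gamma}, ||.||_infty) at level eps *)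
  (forall (t : nat) (lp : nat -> 'rV[R]_N), (0 < t)%N ->
     (forall s i, (1 <= s <= t)%N -> 0 <= lp s ord0 i) ->
     (Dinf gamma (G (\sum_(1 <= s < t) lp s)%R) (G (\sum_(1 <= s < t.+1) lp s)%R)
        <= (eps * linf (lp t))%:E)%E) ->
  forall (ell : nat -> 'rV[R]_N) (arm : nat -> 'I_N) (t : nat),
    (forall s i, 0 <= ell s ord0 i <= 1) ->
    (* each arm i_s is drawn from p_s, hence lies in its support *)
    (forall s, (1 <= s <= t)%N -> 0 < G (Lhat G ell arm s.-1) ord0 (arm s)) ->
    (0 < t)%N ->
    let p := G (Lhat G ell arm t.-1) in
    let p' := G (Lhat G ell arm t) in
    let lh := lhat G ell arm t in
    \sum_i (p ord0 i - p' ord0 i) * lh ord0 i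
      <= eps * (lh ord0 (arm t)) ^+ 2 * (p ord0 (arm t)) `^ gamma.
Proof.
move=> /andP[g1 _] _ _ simp stab ell arm [//|t] hell hpos _.
cbv zeta.
set p := G (Lhat G ell arm t.+1.-1).
set p' := G (Lhat G ell arm t.+1).
set lh := lhat G ell arm t.+1.
have lnn : forall s j, (1 <= s <= t.+1)%N -> 0 <= lhat G ell arm s ord0 j.
  move=> s j hs; rewrite /lhat !mxE /= mulr_natr; apply: mulrn_wge0.
  by apply: divr_ge0; [case/andP: (hell s (arm s)) | apply: ltW; apply: hpos].
have D := stab t.+1 (lhat G ell arm) isT lnn.
rewrite !sum_lhat -/p -/p' -/lh in D.
set i := arm t.+1.
set c := ell t.+1 ord0 i / p ord0 i.
have lhE : lh = c *: @evec R N i by [].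
have pi0 : 0 < p ord0 i by apply: (hpos t.+1); rewrite /= leqnn.
have c0 : 0 <= c by apply: divr_ge0; [case/andP: (hell t.+1 i) | apply: ltW].
rewrite lhE linf_e // in D.
have -> : \sum_j (p ord0 j - p' ord0 j) * lh ord0 j = (p ord0 i - p' ord0 i) * c.
  rewrite (bigD1 i) //= big1 => [|j /negbTE ji]; last first.
    by rewrite lhE !mxE ji /= mulr0 mulr0.
  by rewrite addr0 lhE !mxE !eqxx /= mulr1.
rewrite lhE !mxE !eqxx /= mulr1.
have [c00|cpos] := eqVneq c 0.
  by rewrite c00 !(mulr0, mul0r) expr0n /= !(mulr0, mul0r).
have cp : 0 < c by rewrite lt_neqAle eq_sym cpos c0.
have h0 := Dinf_ge gamma p p' [set: 'I_N]%SET.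
rewrite (probT (simp _)) (probT (simp _)) logg1 sube0 in h0.
have eps0 : 0 <= eps.
  have := le_trans h0 D; rewrite lee_fin => h.
  by rewrite -(pmulr_lge0 _ cp).
have h1 := Dinf_ge gamma p p' [set i]%SET.
rewrite !prob1 (logg_pos _ pi0) in h1.
have h2 := le_trans h1 D.
have [p'le|p'gt] := leP (p' ord0 i) 0.
  by move: h2; rewrite /logg p'le.
rewrite (logg_pos _ p'gt) -EFinB lee_fin in h2.
have k := key g1 p'gt pi0.
have pg0 := powR_ge0 (p ord0 i) gamma.
have k2 : p ord0 i - p' ord0 i <= p ord0 i `^ gamma * (eps * c).
  apply: le_trans k _; exact: ler_wpM2l.
have := ler_wpM2r c0 k2.
move=> h; apply: le_trans h _; rewrite expr2; rewrite le_eqVlt; apply/orP; left; apply/eqP; ring.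
Qed.
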